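(* Let $\mathcal{X}\subseteq\mathbb{R}^d$ be closed and convex, $p\ge2$, $\sigma>0$, and let $h:\mathcal{X}\to\mathbb{R}$ be convex, continuously differentiable and satisfy $D_h(x,y)\ge\frac{\sigma}{p}\|x-y\|^p$ for all $x,y\in\mathcal{X}$. Let $f:\mathcal{X}\to\mathbb{R}$ be convex and differentiable with minimizer $x^\ast$. Let $\delta>0$ and let $(A_k)_{k\ge0}$ be a nondecreasing sequence of positive numbers; set $\alpha_k=A_{k+1}-A_k$ and $\tau_k=\alpha_k/A_{k+1}$. Define $E_k=D_h(x^\ast,z_k)+A_k\big(f(y_k)-f(x^\ast)\big)$. (a) If sequences $(x_k),(y_k),(z_k)$ in $\mathcal{X}$ satisfy, for every $k$, $x_{k+1}=\tau_k z_k+(1-\tau_k)y_k$ and $\nabla h(z_{k+1})=\nabla h(z_k)-\alpha_k\nabla f(x_{k+1})$ (with $y_{k+1}\in\mathcal{X}$ arbitrary), then $$\frac{E_{k+1}-E_k}{\delta}\le\frac{p-1}{p}\sigma^{-\frac1{p-1}}\frac{(A_{k+1}-A_k)^{\frac p{p-1}}}{\delta}\|\nabla f(x_{k+1})\|^{\frac p{p-1}}+\frac{A_{k+1}}{\delta}\big(f(y_{k+1})-f(x_{k+1})\big).$$ (b) If instead they satisfy $x_{k+1}=\tau_k z_k+(1-\tau_k)y_k$ and $\nabla h(z_{k+1})=\nabla h(z_k)-\alpha_k\nabla f(y_{k+1})$ (with $y_{k+1}\in\mathcal{X}$ arbitrary), then $$\frac{E_{k+1}-E_k}{\delta}\le\frac{p-1}{p}\sigma^{-\frac1{p-1}}\frac{(A_{k+1}-A_k)^{\frac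 p{p-1}}}{\delta}\|\nabla f(y_{k+1})\|^{\frac p{p-1}}+\frac{A_{k+1}}{\delta}\langle\nabla f(y_{k+1}),y_{k+1}-x_{k+1}\rangle.$$
   Context: $\|\cdot\|$ is the Euclidean norm and $D_h(y,x)=h(y)-h(x)-\langle\nabla h(x),y-x\rangle$ is the Bregman divergence of $h$. *)

(* Defs.v *)
(* R : realType, R^d rendered as row vectors 'rV[R]_d. *)
From HB Require Import structures.
From mathcomp Require Import all_boot all_order all_algebra.
From mathcomp Require Import all_classical all_reals all_analysis.
Set Implicit Arguments. Unset Strict Implicit. Unset Printing Implicit Defensive.
Import Order.TTheory GRing.Theory Num.Theory.
Import numFieldNormedType.Exports.
Local Open Scope classical_set_scope.
Local Open Scope ring_scope.

Definition dotv {R : realType} {d : nat} (u v : 'rV[R]_d) : R :=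
  \sum_(i < d) u 0 i * v 0 i.
Definition enorm {R : realType} {d : nat} (v : 'rV[R]_d) : R :=
  Num.sqrt (dotv v v).

Definition convex_on {R : realType} {d : nat} (X : set 'rV[R]_d)
  (f : 'rV[R]_d -> R) : Prop :=
  forall x y (t : R), X x -> X y -> 0 <= t <= 1 ->
    f (t *: x + (1 - t) *: y) <= t * f x + (1 - t) * f y.

Definition has_gradient {R : realType} {d : nat} (f : 'rV[R]_d -> R)
  (g : 'rV[R]_d -> 'rV[R]_d) (x : 'rV[R]_d) : Prop :=
  differentiable f x /\ forall v, 'd f x v = dotv (g x) v.

Definition bregman {R : realType} {d : nat} (h : 'rV[R]_d -> R)
  (gh : 'rV[R]_d -> 'rV[R]_d) (y x : 'rV[R]_d) : R :=
  h y - h x - dotv (gh x) (y - x).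

(* Main.v *)
Require Import Defs.
From HB Require Import structures.
From mathcomp Require Import all_boot all_order all_algebra.
From mathcomp Require Import all_classical all_reals all_analysis.
From mathcomp Require Import ring lra.
Import Order.TTheory GRing.Theory Num.Theory.
Import numFieldNormedType.Exports.
Set Implicit Arguments. Unset Strict Implicit. Unset Printing Implicit Defensive.
Local Open Scope classical_set_scope.
Local Open Scope ring_scope.

Section dot.
Variables (R : realType) (d : nat).
Implicit Types u v w : 'rV[R]_d.

Lemma dotvC u v : dotv u v = dotv v u.
Proof. by apply: eq_bigr => i _; rewrite mulrC. Qed.
Lemma dotvDl u v w : dotv (u + v) w = dotv u w + dotv v w.
Proof. by rewrite /dotv -big_split; apply: eq_bigr => i _; rewrite !mxE mulrDl. Qed.
Lemma dotvNl u w : dotv (- u) w = - dotv u w.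
Proof. by rewrite /dotv -sumrN; apply: eq_bigr => i _; rewrite !mxE mulNr. Qed.
Lemma dotvZl a u w : dotv (a *: u) w = a * dotv u w.
Proof. by rewrite /dotv mulr_sumr; apply: eq_bigr => i _; rewrite !mxE mulrA. Qed.
Lemma dotvBl u v w : dotv (u - v) w = dotv u w - dotv v w.
Proof. by rewrite dotvDl dotvNl. Qed.
Lemma dotvDr u v w : dotv w (u + v) = dotv w u + dotv w v.
Proof. by rewrite dotvC dotvDl !(dotvC w). Qed.
Lemma dotvNr u w : dotv w (- u) = - dotv w u.
Proof. by rewrite dotvC dotvNl dotvC. Qed.
Lemma dotvBr u v w : dotv w (u - v) = dotv w u - dotv w v.
Proof. by rewrite dotvDr dotvNr. Qed.
Lemma dotvZr a u w : dotv w (a *: u) = a * dotv w u.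
Proof. by rewrite dotvC dotvZl dotvC. Qed.
Lemma dotvv_ge0 u : 0 <= dotv u u.
Proof. by apply: sumr_ge0 => i _; rewrite -expr2 sqr_ge0. Qed.
Lemma dotv0r u : dotv u 0 = 0.
Proof. by rewrite /dotv big1 // => i _; rewrite mxE mulr0. Qed.

Lemma dotv_sq u v : dotv u v ^+ 2 <= dotv u u * dotv v v.
Proof.
have [v0|vpos] := eqVneq (dotv v v) 0.
  have -> : v = 0.
    apply/rowP => i; rewrite mxE; apply/eqP; rewrite -sqrf_eq0 expr2.
    move: v0; rewrite /dotv => /eqP; rewrite psumr_eq0; last first.
      by move=> j _; rewrite -expr2 sqr_ge0.
    by move=> /allP /(_ i (mem_index_enum _)) /implyP; apply.
  by rewrite !dotv0r expr0n /= mulr0.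
have vp : 0 < dotv v v by rewrite lt_def vpos dotvv_ge0.
have := dotvv_ge0 (dotv v v *: u - dotv u v *: v).
rewrite !dotvBl !dotvBr !dotvZl !dotvZr (dotvC v u) => H.
rewrite -subr_ge0; rewrite -(pmulr_rge0 _ vp).
move: H; set a := dotv u u; set b := dotv u v; set c := dotv v v => H.
lra.
Qed.

Lemma cauchy_schwarz u v : dotv u v <= enorm u * enorm v.
Proof.
rewrite /enorm -sqrtrM ?dotvv_ge0 //.
apply: le_trans (ler_norm _) _.
rewrite -sqrtr_sqr; apply: ler_wsqrtr; exact: dotv_sq.
Qed.

Lemma enormN u : enorm (- u) = enorm u.
Proof. by rewrite /enorm dotvNl dotvNr opprK. Qed.
Lemma enorm_ge0 u : 0 <= enorm u.
Proof. exact: sqrtr_ge0. Qed.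
End dot.

Lemma grad_ineq (R : realType) (d : nat) (X : set 'rV[R]_d) (f : 'rV[R]_d -> R)
  (gf : 'rV[R]_d -> 'rV[R]_d) x u :
  convex_on X f -> X x -> X u -> has_gradient f gf x ->
  dotv (gf x) (u - x) <= f u - f x.
Proof.
move=> cf Xx Xu [df dfE].
rewrite -dfE -deriveE //.
have dv : derivable f x (u - x) by apply: diff_derivable.
rewrite /derive.
apply: (@cvgr_to_le _ (at_right 0) _ _ (fun h => h^-1 *: ((f \o shift x) (h *: (u - x)) - f x))); first last.
  exists 1 => //= t; rewrite /ball /= sub0r normrN => t1 t0.
  rewrite ger0_norm ?ltW // in t1.
  have := cf u x t Xu Xx; rewrite (ltW t0) (ltW t1) => /(_ isT).
  have -> : t *: (u - x) + x = t *: u + (1 - t) *: x.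
    by rewrite scalerBr scalerBl scale1r -addrA (addrC (- _)).
  move=> H; rewrite /= /shift /= -[_ *: _]/(_ * _).
  rewrite ler_pdivrMl //; lra.
move=> A /dv /nbhs_ballP [_ /posnumP[e] xe_A].
by exists e%:num => //= y xe_y /gt_eqF/negbT/xe_A; exact.
Qed.

Lemma young_step (R : realType) (p sigma c r : R) : 2 <= p -> 0 < sigma ->
  0 <= c -> 0 <= r ->
  c * r - sigma / p * r `^ p <=
  (p - 1) / p * sigma `^ (- (p - 1)^-1) * c `^ (p / (p - 1)).
Proof.
move=> p2 s0 c0 r0.
have p0 : 0 < p by lra.
have p10 : 0 < p - 1 by lra.
have pn0 : p != 0 by rewrite gt_eqF.
have p1n0 : p - 1 != 0 by rewrite gt_eqF.
set q := p / (p - 1).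
have q0 : 0 < q by rewrite divr_gt0.
have pq : p^-1 + q^-1 = 1 by rewrite /q invf_div; field.
have := @conjugate_powR R (sigma `^ (p^-1) * r) (c * sigma `^ (- p^-1)) p q
  (mulr_ge0 (powR_ge0 _ _) r0) (mulr_ge0 c0 (powR_ge0 _ _)) p0 q0 pq.
have sp : 0 < sigma `^ (p^-1) by rewrite powR_gt0.
rewrite powRN.
have -> : sigma `^ p^-1 * r * (c / sigma `^ p^-1) = c * r.
  by field; rewrite gt_eqF.
rewrite -(powRN sigma (p^-1)).
rewrite (powRM _ (powR_ge0 _ _) r0) (powRM _ c0 (powR_ge0 _ _)).
rewrite -(powRrM sigma p^-1 p) -(powRrM sigma (- p^-1) q) mulVf // powRr1; last exact: ltW.
have -> : (- p^-1 * q) = - (p - 1)^-1.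
  rewrite /q mulNr mulrA mulVf // mul1r //.
move=> H.
have e1 : c `^ q * sigma `^ (- (p - 1)^-1) / q = (p - 1) / p * sigma `^ (- (p - 1)^-1) * c `^ q.
  by rewrite /q invf_div; ring.
have e2 : sigma `^ p^-1 `^ p * r `^ p / p = sigma / p * r `^ p.
  by rewrite -powRrM mulVf // powRr1 ?(ltW s0) //; ring.
rewrite ?e2 in H.
lra.
Qed.

Lemma core (R : realType) (d : nat) (h : 'rV[R]_d -> R) (gh : 'rV[R]_d -> 'rV[R]_d)
  (p sigma : R) (xs z z' y x' g : 'rV[R]_d) (A0 A1 : R) :
  2 <= p -> 0 < sigma ->
  sigma / p * (enorm (z' - z)) `^ p <= bregman h gh z' z ->
  0 < A0 -> A0 <= A1 ->
  x' = ((A1 - A0) / A1) *: z + (1 - (A1 - A0) / A1) *: y ->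
  gh z' = gh z - (A1 - A0) *: g ->
  bregman h gh xs z' - bregman h gh xs z <=
    (p - 1) / p * sigma `^ (- (p - 1)^-1) * (A1 - A0) `^ (p / (p - 1))
      * (enorm g) `^ (p / (p - 1))
    + (A1 - A0) * dotv g (xs - x') + A0 * dotv g (y - x').
Proof.
move=> p2 s0 hb A0p A01 Hx Hz.
have A1p : 0 < A1 by lra.
have al0 : 0 <= A1 - A0 by lra.
have three : bregman h gh xs z' - bregman h gh xs z =
   dotv (gh z - gh z') (xs - z') - bregman h gh z' z.
  rewrite /bregman !dotvBl !dotvBr; lra.
have eg : gh z - gh z' = (A1 - A0) *: g.
  by rewrite Hz opprB addrCA subrr addr0.
rewrite three eg dotvZl.
have hx : dotv g x' = (A1 - A0) / A1 * dotv g z + (1 - (A1 - A0) / A1) * dotv g y.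
  by rewrite Hx dotvDr !dotvZr.
have hz : (A1 - A0) * dotv g z = A1 * dotv g x' - A0 * dotv g y.
  rewrite hx; field; rewrite gt_eqF //.
have cs := cauchy_schwarz g (z - z').
have en : enorm (z' - z) = enorm (z - z') by rewrite -enormN opprB.
rewrite en in hb.
have y1 := @young_step _ p sigma ((A1 - A0) * enorm g) (enorm (z - z')) p2 s0
  (mulr_ge0 al0 (enorm_ge0 _)) (enorm_ge0 _).
rewrite powRM // ?enorm_ge0 // in y1.
have csa : (A1 - A0) * dotv g (z - z') <= (A1 - A0) * (enorm g * enorm (z - z')).
  exact: ler_wpM2l.
rewrite !dotvBr in csa *.
lra.
Qed.

Lemma div_step (R : realType) (L K Q G A W delta : R) : 0 < delta ->
  L <= K * Q * G + A * W -> L / delta <= K * (Q / delta) * G + A / delta * W.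
Proof.
move=> d0 H.
have -> : K * (Q / delta) * G + A / delta * W = (K * Q * G + A * W) / delta by field; rewrite gt_eqF.
by rewrite ler_pM2r ?invr_gt0.
Qed.

Theorem proposition5 (R : realType) (d : nat) (X : set 'rV[R]_d)
  (p sigma delta : R)
  (h f : 'rV[R]_d -> R) (gh gf : 'rV[R]_d -> 'rV[R]_d) (xstar : 'rV[R]_d)
  (A : nat -> R) :
  closed X -> convex_set X ->
  2 <= p -> 0 < sigma ->
  convex_on X h -> (forall x, X x -> has_gradient h gh x) ->
  {within X, continuous gh} ->
  (forall x y, X x -> X y ->
     sigma / p * (enorm (x - y)) `^ p <= bregman h gh x y) ->
  convex_on X f -> (forall x, X x -> has_gradient f gf x) ->
  X xstar -> (forall x, X x -> f xstar <= f x) ->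
  0 < delta ->
  (forall k, 0 < A k) -> (forall k, A k <= A k.+1) ->
  let alpha := fun k => A k.+1 - A k in
  let tau := fun k => alpha k / A k.+1 in
  (* part (a) *)
  (forall (x y z : nat -> 'rV[R]_d),
     (forall k, X (x k)) -> (forall k, X (y k)) -> (forall k, X (z k)) ->
     (forall k, x k.+1 = tau k *: z k + (1 - tau k) *: y k) ->
     (forall k, gh (z k.+1) = gh (z k) - alpha k *: gf (x k.+1)) ->
     let E := fun k => bregman h gh xstar (z k) + A k * (f (y k) - f xstar) in
     forall k,
       (E k.+1 - E k) / delta <=
         (p - 1) / p * sigma `^ (- (p - 1)^-1)
           * ((A k.+1 - A k) `^ (p / (p - 1)) / delta)
           * (enorm (gf (x k.+1))) `^ (p / (p - 1))
         + A k.+1 / delta * (f (y k.+1) - f (x k.+1)))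
  /\
  (* part (b) *)
  (forall (x y z : nat -> 'rV[R]_d),
     (forall k, X (x k)) -> (forall k, X (y k)) -> (forall k, X (z k)) ->
     (forall k, x k.+1 = tau k *: z k + (1 - tau k) *: y k) ->
     (forall k, gh (z k.+1) = gh (z k) - alpha k *: gf (y k.+1)) ->
     let E := fun k => bregman h gh xstar (z k) + A k * (f (y k) - f xstar) in
     forall k,
       (E k.+1 - E k) / delta <=
         (p - 1) / p * sigma `^ (- (p - 1)^-1)
           * ((A k.+1 - A k) `^ (p / (p - 1)) / delta)
           * (enorm (gf (y k.+1))) `^ (p / (p - 1))
         + A k.+1 / delta * dotv (gf (y k.+1)) (y k.+1 - x k.+1)).
Proof.
move=> cX convX p2 s0 ch hgrad ghc hbreg cf fgrad Xs fmin d0 Apos Amono alpha tau.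
have dn : delta != 0 by rewrite gt_eqF.
split.
- move=> x y z Xx Xy Xz Hx Hz E k.
  have c := @core _ _ h gh p sigma xstar (z k) (z k.+1) (y k) (x k.+1) (gf (x k.+1))
    (A k) (A k.+1) p2 s0 (hbreg _ _ (Xz k.+1) (Xz k)) (Apos k) (Amono k) (Hx k) (Hz k).
  have g1 := grad_ineq cf (Xx k.+1) Xs (fgrad _ (Xx k.+1)).
  have g2 := grad_ineq cf (Xx k.+1) (Xy k) (fgrad _ (Xx k.+1)).
  have a0 : 0 <= A k.+1 - A k by rewrite subr_ge0.
  have m1 := ler_wpM2l a0 g1.
  have m2 := ler_wpM2l (ltW (Apos k)) g2.
  apply: (div_step d0).
  rewrite /E /=.
  lra.
- move=> x y z Xx Xy Xz Hx Hz E k.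
  have c := @core _ _ h gh p sigma xstar (z k) (z k.+1) (y k) (x k.+1) (gf (y k.+1))
    (A k) (A k.+1) p2 s0 (hbreg _ _ (Xz k.+1) (Xz k)) (Apos k) (Amono k) (Hx k) (Hz k).
  have g1 := grad_ineq cf (Xy k.+1) Xs (fgrad _ (Xy k.+1)).
  have g2 := grad_ineq cf (Xy k.+1) (Xy k) (fgrad _ (Xy k.+1)).
  have a0 : 0 <= A k.+1 - A k by rewrite subr_ge0.
  have m1 := ler_wpM2l a0 g1.
  have m2 := ler_wpM2l (ltW (Apos k)) g2.
  rewrite !dotvBr in c m1 m2 *.
  apply: (div_step d0).
  rewrite /E /=.
  lra.
Qed.
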